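(* Let $n\ge2$, $1\le m<n$, and write $n=qm+r$ with integers $q\ge1$ and $0<r\le m$. For each subset $I\subset\{1,\ldots,m\}$ with $|I|=r$, the polynomial $F_I$ on $\mathfrak q^*=\mathfrak{sl}_n\oplus m\mathbb C^n$ defined by $$F_I(A,v)=\det\bigl(v\,|\,Av\,|\,\cdots\,|\,A^{q-1}v\,|\,A^q v_I\bigr),\qquad A\in\mathfrak{sl}_n,\ v\in m\mathbb C^n,$$ is invariant under $\exp(V)$ (equivalently under the abelian ideal $V$ of $\mathfrak q$). Here $v$ is viewed as an $n\times m$ matrix, $v_I$ is the $n\times r$ submatrix of $v$ formed by the columns with indices in $I$, and the argument of $\det$ is the $n\times n$ matrix obtained by concatenating the indicated blocks.
   Context: $\mathfrak q=\mathfrak{sl}_n\ltimes V$ with $V=m(\mathbb C^n)^*$ ($m$ copies of the dual defining representation), an abelian ideal; $Q=\mathrm{SL}_n\ltimes\exp(V)$. Identify $\mathfrak{sl}_n\cong\mathfrak{sl}_n^*$ via the trace form, so $\mathfrak q^*=\mathfrak{sl}_n\oplus V^*$ with $V^*=m\mathbb C^n$. Each $F_I$ is clearly $\mathrm{SL}_n$-invariant. *)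

(* Defs.v *)
From HB Require Import structures.
From mathcomp Require Import all_boot all_order all_algebra.
Set Implicit Arguments. Unset Strict Implicit. Unset Printing Implicit Defensive.
Import Order.TTheory GRing.Theory Num.Theory.
Local Open Scope ring_scope.

Section Defs.
Variable R : numClosedFieldType.

Fixpoint krylov (n m : nat) (A : 'M[R]_n) (v : 'M[R]_(n, m)) (k : nat)
  : 'M[R]_(n, k * m) :=
  match k return 'M[R]_(n, k * m) with
  | 0 => 0
  | k'.+1 => row_mx v (A *m krylov A v k')
  end.

(* v_I : the n x |I| submatrix of v of the columns with index in I,
   in increasing order *)
Definition subcols (n m : nat) (v : 'M[R]_(n, m)) (I : {set 'I_m})
  : 'M[R]_(n, #|I|) := \matrix_(i < n, k < #|I|) v i (enum_val k).

(* determinant of a matrix that is square up to a cast of its column count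
   (0 if the sizes do not match; only used in the square case) *)
Definition sqdet (n k : nat) (M : 'M[R]_(n, k)) : R :=
  match k =P n with
  | ReflectT e => \det (castmx (erefl n, e) M)
  | ReflectF _ => 0
  end.

Definition F_I (n m q : nat) (I : {set 'I_m}) (A : 'M[R]_n) (v : 'M[R]_(n, m))
  : R := sqdet (row_mx (krylov A v q) (A ^+ q *m subcols v I)).

(* orthogonal projection gl_n -> sl_n (for the trace form) *)
Definition slproj (n : nat) (X : 'M[R]_n) : 'M[R]_n :=
  X - (\tr X / n%:R)%:M.

(* Coadjoint action of exp(w), w in V = m (C^n)^* (an m x n matrix whose rows
   are the m dual vectors), on q^* = sl_n (+) m C^n, with xi = (A, v),
   v an n x m matrix.  (A,v) |-> (A + pr_sl(v w), v). *)
Definition expV_act (n m : nat) (w : 'M[R]_(m, n))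
  (xi : 'M[R]_n * 'M[R]_(n, m)) : 'M[R]_n * 'M[R]_(n, m) :=
  (xi.1 + slproj (xi.2 *m w), xi.2).

End Defs.

(* Main.v *)
Require Import Defs.
From HB Require Import structures.
From mathcomp Require Import all_boot all_order all_algebra.
Set Implicit Arguments. Unset Strict Implicit. Unset Printing Implicit Defensive.
Import Order.TTheory GRing.Theory Num.Theory.
Local Open Scope ring_scope.

Fixpoint Pm (R : numClosedFieldType) (m b : nat) : 'M[R]_(m + b * m, b * m) :=
  match b return 'M[R]_(m + b * m, b * m) with
  | 0 => 0
  | b'.+1 => block_mx 1 0 0 (Pm R m b')
  end.

Lemma krylovS (R : numClosedFieldType) n m (A : 'M[R]_n) (v : 'M[R]_(n,m)) b :
  krylov A v b.+1 = row_mx v (A *m krylov A v b).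
Proof. by []. Qed.

Lemma krylovP (R : numClosedFieldType) n m (A : 'M[R]_n) (v : 'M[R]_(n,m)) b :
  krylov A v b = row_mx v (A *m krylov A v b) *m Pm R m b.
Proof.
elim: b => [|b IH]; first by rewrite mulmx0; apply/matrixP=> i [].
rewrite [in LHS]krylovS [Pm _ _ _]/= mul_row_block !mulmx0 addr0 add0r mulmx1.
by rewrite -mulmxA -IH.
Qed.

Lemma detQ (R : numClosedFieldType) m (c : R) b :
  \det (1%:M - c *: dsubmx (Pm R m b)) = 1.
Proof.
elim: b => [|b IH]; first by rewrite det_mx00.
rewrite [Pm _ _ _]/= block_mxEv col_mxKd.
rewrite -[Pm R m b]vsubmxK.
have -> : row_mx (0 : 'M[R]_(b.+1 * m, m)) (col_mx (usubmx (Pm R m b)) (dsubmx (Pm R m b)))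
  = block_mx 0 (usubmx (Pm R m b)) 0 (dsubmx (Pm R m b)) :> 'M_(m + b * m).
  by rewrite block_mxEh col_mx0.
rewrite scalar_mx_block scale_block_mx opp_block_mx add_block_mx.
rewrite !scaler0 !oppr0 !addr0 !add0r. rewrite (@det_ublock _ m (b * m)) det1 mul1r IH. done.
Qed.

Lemma sqdetM (R : numClosedFieldType) n k (X : 'M[R]_(n, k)) (Y : 'M[R]_k) :
  sqdet (X *m Y) = sqdet X * \det Y.
Proof.
rewrite /sqdet; case: eqP => [e|_]; last by rewrite mul0r.
by subst k; rewrite !castmx_id det_mulmx.
Qed.

Lemma zmod6 (V : zmodType) (a1 a2 a3 a4 a5 a6 : V) :
  (a1 + a2 - a3) + (a4 + a5 - a6) = a1 + ((a2 + a5) + a4 - (a3 + a6)).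
Proof.
rewrite opprD !addrA; congr (_ - _).
by rewrite (addrAC _ (- a3)) (addrAC _ (- a3)) (addrAC _ a4 a5).
Qed.


Lemma powE (R : numClosedFieldType) n m (A : 'M[R]_n) (v : 'M[R]_(n,m)) b :
  exists E, A ^+ b *m v = krylov A v b.+1 *m E.
Proof.
elim: b => [|b [E IH]].
  by exists (col_mx 1%:M 0); rewrite krylovS mul_row_col mul1mx mulmx0 addr0 mulmx1.
exists (col_mx 0 E); rewrite [krylov A v b.+2]krylovS mul_row_col mulmx0 add0r.
by rewrite exprS -mulmxA IH mulmxA.
Qed.

Lemma powC (R : numClosedFieldType) n m (A : 'M[R]_n) (v : 'M[R]_(n,m)) w c b :
  exists C, (A + v *m w - c%:M) ^+ b *m v = A ^+ b *m v + krylov A v b *m C.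
Proof.
elim: b => [|b [C IH]].
  by exists 0; rewrite mulmx0 addr0.
have [E HE] := powE A v b.
exists (col_mx (w *m (A ^+ b *m v + krylov A v b *m C)) C
        - c *: (E + Pm R m b *m C)).
rewrite exprS -mulmxA IH mulmxBr mulmxDr krylovS mul_row_col -scalemxAr mulmxDr.
rewrite (mulmxDr (row_mx _ _)) (mulmxA (row_mx _ _)) -krylovP -krylovS -HE.
rewrite !mulmxBl !mulmxDl !mul_scalar_mx -!mulmxA exprS -mulmxA.
by rewrite mulmxDr scalerDr zmod6.
Qed.

Lemma krylovU (R : numClosedFieldType) n m (A : 'M[R]_n) (v : 'M[R]_(n,m)) w c b :
  exists U : 'M[R]_(b * m),
    krylov (A + v *m w - c%:M) v b = krylov A v b *m U /\ \det U = 1.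
Proof.
elim: b => [|b [U [IH dU]]].
  by exists 1%:M; split; [rewrite mulmx1; apply/matrixP=> i [] | rewrite det_mx00].
set G : 'M[R]_(m + b * m, b * m) :=
  col_mx (w *m krylov A v b) 1%:M - c *: Pm R m b.
exists (row_mx (col_mx 1%:M 0) (G *m U) : 'M_(m + b * m)); split.
  rewrite krylovS IH [krylov A v b.+1]krylovS mul_mx_row mul_row_col mulmx1 mulmx0 addr0.
  have HG : (A + v *m w - c%:M) *m krylov A v b = row_mx v (A *m krylov A v b) *m G.
    rewrite /G mulmxBr mul_row_col mulmx1 -scalemxAr -krylovP.
    by rewrite !mulmxBl mulmxDl mul_scalar_mx mulmxA (addrC (A *m _)).
  by rewrite mulmxA HG mulmxA.
rewrite -[G *m U]vsubmxK -block_mxEh (@det_ublock _ m (b * m)) det1 mul1r.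
by rewrite -mul_dsub_mx det_mulmx dU mulr1 /G linearB linearZ /= col_mxKd detQ.
Qed.

Lemma subcolsE (R : numClosedFieldType) n m (v : 'M[R]_(n,m)) (I : {set 'I_m}) :
  subcols v I = v *m \matrix_(t < m, k < #|I|) (t == enum_val k)%:R.
Proof.
apply/matrixP=> i k; rewrite !mxE (bigD1 (enum_val k)) //= big1 ?addr0.
  by rewrite mxE eqxx mulr1.
by move=> t /negbTE htk; rewrite mxE htk mulr0.
Qed.

Theorem lemma4p2 (R : numClosedFieldType) (n m q r : nat)
  (hn : (2 <= n)%N) (hm1 : (1 <= m)%N) (hmn : (m < n)%N)
  (hq : (1 <= q)%N) (hr0 : (0 < r)%N) (hrm : (r <= m)%N)
  (hdiv : n = (q * m + r)%N)
  (I : {set 'I_m}) (hI : #|I| = r)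
  (A : 'M[R]_n) (v : 'M[R]_(n, m)) (w : 'M[R]_(m, n)) :
  \tr A = 0 ->
  F_I q I (expV_act w (A, v)).1 (expV_act w (A, v)).2 = F_I q I A v.
Proof.
move=> _; rewrite /F_I /expV_act /= /slproj addrA.
set c := \tr (v *m w) / n%:R.
have [C HC] := powC A v w c q.
have [U [HU dU]] := krylovU A v w c q.
rewrite !subcolsE !mulmxA HC HU.
set S := \matrix_(t < m, k < #|I|) (t == enum_val k)%:R.
have -> : row_mx (krylov A v q *m U) ((A ^+ q *m v + krylov A v q *m C) *m S)
  = row_mx (krylov A v q) (A ^+ q *m v *m S) *m block_mx U (C *m S) 0 1%:M.
  by rewrite mul_row_block !mulmx0 !addr0 mulmx1 mulmxDl mulmxA addrC.
by rewrite sqdetM det_ublock dU det1 mulr1 mulr1.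
Qed.
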